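(* The graphs $\mathcal{F}_1$, $\mathcal{F}_2$ and $\mathcal{F}_3$ are non-Mengerian.
   Context: Graphs are finite, loopless, and may have parallel edges. A temporal graph is a pair $(G,\lambda)$ with $\lambda:E(G)\to\mathbb{Z}_{>0}$. A temporal $s,t$-path is an $s,t$-path $(s=v_1,e_1,\dots,e_{k-1},v_k=t)$ of $G$ (no repeated vertices) with $\lambda(e_1)\le\dots\le\lambda(e_{k-1})$. Two temporal $s,t$-paths are disjoint if they share no vertex other than $s,t$. For distinct non-adjacent $s,t$, a temporal $s,t$-vertex cut is a set $S\subseteq V(G)\setminus\{s,t\}$ such that $G-S$ (with $\lambda$ restricted) has no temporal $s,t$-path. $p_{G,\lambda}(s,t)$ is the maximum number of pairwise disjoint temporal $s,t$-paths and $c_{G,\lambda}(s,t)$ the minimum size of a temporal $s,t$-vertex cut. $G$ is Mengerian if $p_{G,\lambda}(s,t)=c_{G,\lambda}(s,t)$ for every $\lambda$ and every pair of distinct non-adjacent $s,t\in V(G)$. $\mathcal{F}_3$ is the gem: the simple graph on vertices $s,u,v,t,x$ with edges $su,uv,vt,xs,xu,xv,xt$. $\mathcal{F}_1$ is the graph on vertices $s,u,v,t,w,w'$ with simple edges $su,uv,vt,sw,wt,uw',w'v$ and exactly two parallel edges between $w$ and $w'$. $\mathcal{F}_2$ is the graph on vertices $s,u,v,t,w,w'$ with simple edges $su,uv,vt,sw,uw,w'v,w't$ and exactly two parallel edges between $w$ and $w'$. *)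

(* Defs.v *)
From mathcomp Require Import all_boot.
From mathcomp Require Import boolp.
Set Implicit Arguments. Unset Strict Implicit. Unset Printing Implicit Defensive.

(* A (multi)graph: vertex type V, edge type E (both finite), and each edge e
   has an (unordered) pair of endpoints [ends e].  Parallel edges are distinct
   elements of E with the same endpoints. *)
Section Temporal.
Variables (V E : finType) (ends : E -> V * V).

Definition joins (e : E) (x y : V) : bool :=
  (ends e == (x, y)) || (ends e == (y, x)).

Definition adjacent (x y : V) : bool := [exists e, joins e x y].

(* A path starting at s is given by the sequence of (edge, next vertex) steps. *)
Fixpoint walk_ok (x : V) (p : seq (E * V)) : bool :=
  match p with
  | [::] => true
  | (e, y) :: p' => joins e x y && walk_ok y p'
  end.

Definition tpath (lam : E -> nat) (s t : V) (p : seq (E * V)) : bool :=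
  [&& walk_ok s p, uniq (s :: map snd p), last s (map snd p) == t
    & sorted leq (map (fun ev => lam ev.1) p)].

Definition pverts (s : V) (p : seq (E * V)) : seq V := s :: map snd p.

Definition disjoint_paths (s t : V) (p q : seq (E * V)) : bool :=
  all (fun v => (v \notin pverts s q) || (v == s) || (v == t)) (pverts s p).

Definition has_disjoint_tpaths (lam : E -> nat) (s t : V) (k : nat) : Prop :=
  exists ps : seq (seq (E * V)),
    [/\ size ps = k, all (tpath lam s t) ps
      & pairwise (fun p q => disjoint_paths s t p q) ps].

Definition tcut (lam : E -> nat) (s t : V) (S : {set V}) : Prop :=
  [/\ s \notin S, t \notin S &
      forall p, tpath lam s t p -> exists2 v, v \in map snd p & v \in S].

(* p_{G,lam}(s,t): maximum number of pairwise disjoint temporal s,t-paths.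
   (Any family of pairwise disjoint s,t-paths, s,t non-adjacent, has at most
   #|V| members, since each path has an internal vertex.) *)
Definition pval (lam : E -> nat) (s t : V) : nat :=
  \max_(k < #|V|.+1 | `[< has_disjoint_tpaths lam s t k >]) k.

(* c_{G,lam}(s,t): minimum size of a temporal s,t-vertex cut
   (for non-adjacent s,t the set V \ {s,t} is always a cut). *)
Definition cval (lam : E -> nat) (s t : V) : nat :=
  \big[minn/#|V|]_(S : {set V} | `[< tcut lam s t S >]) #|S|.

Definition Mengerian : Prop :=
  forall lam : E -> nat, (forall e, 0 < lam e) ->
  forall s t : V, s != t -> ~~ adjacent s t -> pval lam s t = cval lam s t.

End Temporal.

Definition graph_ends (n : nat) (es : seq (nat * nat)) (e : 'I_(size es))
  : 'I_n.+1 * 'I_n.+1 :=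
  let: (a, b) := nth (0, 0) es e in (inord a, inord b).

(* F1: s=0, u=1, v=2, t=3, w=4, w'=5 *)
Definition F1_edges : seq (nat * nat) :=
  [:: (0,1); (1,2); (2,3); (0,4); (4,3); (1,5); (5,2); (4,5); (4,5)].
(* F2: s=0, u=1, v=2, t=3, w=4, w'=5 *)
Definition F2_edges : seq (nat * nat) :=
  [:: (0,1); (1,2); (2,3); (0,4); (1,4); (5,2); (5,3); (4,5); (4,5)].
(* F3 (gem): s=0, u=1, v=2, t=3, x=4 *)
Definition F3_edges : seq (nat * nat) :=
  [:: (0,1); (1,2); (2,3); (4,0); (4,1); (4,2); (4,3)].

Definition F1_ends := @graph_ends 5 F1_edges.
Definition F2_ends := @graph_ends 5 F2_edges.
Definition F3_ends := @graph_ends 4 F3_edges.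

(* Main.v *)
Require Import Defs.
From mathcomp Require Import all_boot boolp.
Set Implicit Arguments. Unset Strict Implicit. Unset Printing Implicit Defensive.

Section Gen.
Variables (V E : finType) (ends : E -> V * V).
Variables (es : seq E) (vs : seq V).
Hypotheses (hes : forall e, e \in es) (hvs : forall v, v \in vs).

Definition steps (x : V) : seq (E * V) :=
  [seq ey <- [seq (e, y) | e <- es, y <- vs] | joins ends ey.1 x ey.2].

Fixpoint walks (n : nat) (x : V) : seq (seq (E * V)) :=
  [::] :: (if n is n'.+1 then
    flatten [seq [seq ey :: w | w <- walks n' ey.2] | ey <- steps x]
  else [::]).

Lemma walksP n x p : walk_ok ends x p -> size p <= n -> p \in walks n x.
Proof.
elim: n x p => [|n IH] x [|[e y] p] //=; rewrite ?in_cons ?eqxx //.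
move=> /andP[j w] sz; apply/orP; right; apply/flattenP.
exists [seq (e, y) :: w | w <- walks n y].
  apply/(map_f (fun ey : E * V => [seq ey :: w0 | w0 <- walks n ey.2])).
  by rewrite mem_filter /= j; apply/allpairsP; exists (e, y).
by apply: map_f; apply: IH.
Qed.

Lemma cardV : #|V| <= size vs.
Proof. by rewrite cardE; apply: uniq_leq_size (enum_uniq _) _ => x _. Qed.

Variables (lam : E -> nat) (s t : V).
Definition W := [seq p <- walks (size vs) s | tpath ends lam s t p].

Lemma tpathW p : tpath ends lam s t p -> p \in W.
Proof.
move=> tp; rewrite mem_filter tp; case/and4P: tp => w u _ _.
apply: walksP => //.
have := card_uniqP u; rewrite /= => H.
have := max_card (mem (s :: [seq i.2 | i <- p])).
rewrite H /= size_map => /ltnW h; exact: leq_trans h cardV.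
Qed.

Definition check1 := all (fun p => all (fun q => ~~ disjoint_paths s t p q) W) W.
Definition check2 := (W != [::]) &&
  all (fun v => (v == t) || has (fun p => v \notin map snd p) W) vs.

Lemma pval_le1 : check1 -> pval ends lam s t <= 1.
Proof.
move=> c1; apply/bigmax_leqP => k /asboolP [ps [sz al pw]].
case: ps sz al pw => [<-|p [<-|q ps sz]] //= /and3P[tp tq _] /andP[/andP[d _] _].
move/allP: c1 => /(_ p (tpathW tp)) /allP /(_ q (tpathW tq)).
by rewrite d.
Qed.

Lemma cval_ge2 : 2 <= #|V| -> check2 -> 2 <= cval ends lam s t.
Proof.
move=> hV /andP[ne c2]; rewrite /cval; apply: (big_ind (fun n => 2 <= n)) => //.
  by move=> a b; rewrite leq_min => -> ->.
move=> S /asboolP [sS tS cut]; rewrite leqNgt; apply/negP => small.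
have inW p : p \in W -> tpath ends lam s t p by rewrite mem_filter => /andP[].
move: small; rewrite ltnS leq_eqVlt ltnS leqn0 => /orP[/cards1P [v Sv]|/eqP/cards0_eq S0].
  have vt : v != t by apply: contraNneq tS => <-; rewrite Sv set11.
  move/allP: c2 => /(_ v (hvs v)); rewrite (negbTE vt) /= => /hasP [p pW vp].
  have [w wp] := cut p (inW p pW); rewrite Sv inE => /eqP ww.
  by move: vp; rewrite -ww wp.
case: W ne inW => [//|p0 W0] _ inW.
have [w _] := cut p0 (inW p0 (mem_head _ _)).
by rewrite S0 inE.
Qed.

Lemma notM : (forall e, 0 < lam e) -> s != t -> ~~ has (fun e => joins ends e s t) es ->
  2 <= #|V| -> check1 -> check2 -> ~ Mengerian ends.
Proof.
move=> pos st na hV c1 c2 M.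
have na' : ~~ adjacent ends s t.
  apply/existsP => -[e j]; move/hasP: na; apply; exists e => //.
have := M lam pos s t st na'.
have := pval_le1 c1; have := cval_ge2 hV c2.
by move=> a b e; move: b; rewrite e => /(leq_trans a).
Qed.
End Gen.

Definition myinord n k : 'I_n.+1 := Ordinal (ltn_pmod k (ltn0Sn n)).

Lemma myinordE n k : k < n.+1 -> myinord n k = inord k.
Proof. by move=> h; apply: val_inj; rewrite /= inordK // modn_small. Qed.

Lemma myinord_all n (x : 'I_n.+1) : x \in [seq myinord n i | i <- iota 0 n.+1].
Proof.
apply/mapP; exists (val x); first by rewrite mem_iota add0n ltn_ord.
by rewrite myinordE ?inord_val ?ltn_ord.
Qed.

Definition mygraph_ends (n : nat) (es : seq (nat * nat)) (e : 'I_(size es))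
  : 'I_n.+1 * 'I_n.+1 :=
  let: (a, b) := nth (0, 0) es e in (myinord n a, myinord n b).

Lemma graph_endsE n es : all (fun ab => (ab.1 < n.+1) && (ab.2 < n.+1)) es ->
  @graph_ends n es = @mygraph_ends n es.
Proof.
move=> /allP h; apply: funext => e; rewrite /graph_ends /mygraph_ends.
have := h (nth (0,0) es e) (mem_nth _ (ltn_ord e)).
by case: (nth _ _ _) => a b /= /andP[ha hb]; rewrite !myinordE.
Qed.

Definition lam1 (e : 'I_9) : nat := nth 1 [:: 1;1;2;2;1;1;2;2;1] e.
Definition lam2 (e : 'I_9) : nat := nth 1 [:: 1;1;2;2;1;2;1;2;1] e.
Definition lam3 (e : 'I_7) : nat := nth 1 [:: 1;1;2;2;1;2;1] e.

Lemma lam1_pos e : 0 < lam1 e.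
Proof. by rewrite /lam1; case: e => [[|[|[|[|[|[|[|[|[|]]]]]]]]]]. Qed.
Lemma lam2_pos e : 0 < lam2 e.
Proof. by rewrite /lam2; case: e => [[|[|[|[|[|[|[|[|[|]]]]]]]]]]. Qed.
Lemma lam3_pos e : 0 < lam3 e.
Proof. by rewrite /lam3; case: e => [[|[|[|[|[|[|[|]]]]]]]]. Qed.

Theorem lemma1 :
  ~ Mengerian F1_ends /\ ~ Mengerian F2_ends /\ ~ Mengerian F3_ends.
Proof.
rewrite /F1_ends /F2_ends /F3_ends !graph_endsE //.
split; [|split].
- apply: (@notM _ _ _ _ _ (myinord_all (n:=8)) (myinord_all (n:=5)) lam1 (myinord 5 0) (myinord 5 3) lam1_pos);
  try by vm_compute.
  by rewrite card_ord.
- apply: (@notM _ _ _ _ _ (myinord_all (n:=8)) (myinord_all (n:=5)) lam2 (myinord 5 0) (myinord 5 3) lam2_pos);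
  try by vm_compute.
  by rewrite card_ord.
- refine (@notM _ _ (@mygraph_ends 4 F3_edges) _ _ (myinord_all (n:=6)) (myinord_all (n:=4)) lam3 (myinord 4 0) (myinord 4 3) lam3_pos _ _ _ _ _);
  try by vm_compute.
  by rewrite card_ord.
Qed.
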